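(* (a) If $S$ is a discrete semigroup with $S^2\neq S$, then $\ell^1(S)$ is not super weakly amenable. (b) Let $S=\{t,0\}$ with multiplication $t0=0t=t^2=0^2=0$. Then $\ell^1(S)$ is semiweakly amenable but not super weakly amenable.
   Context: $\ell^1(S)$ is the semigroup algebra with convolution $\delta_s*\delta_u=\delta_{su}$; $S^2=\{su:s,u\in S\}$. $\mathcal A^*$ is the dual $\mathcal A$-bimodule ($\langle x,a\cdot f\rangle=\langle xa,f\rangle$, $\langle x,f\cdot a\rangle=\langle ax,f\rangle$). A derivation $D:\mathcal A\to X$ is a bounded linear map with $D(ab)=D(a)\cdot b+a\cdot D(b)$; it is inner if $D(a)=a\cdot x-x\cdot a$ for some $x\in X$. $\mathcal A$ is semiweakly amenable if every derivation $D:\mathcal A\to\mathcal A^*$ with $\langle D(a),b\rangle+\langle D(b),a\rangle=0$ for all $a,b$ is inner. For a continuous homomorphism $\varphi:\mathcal A\to\mathcal B$, $\mathcal B_\varphi$ is $\mathcal B$ with $a\cdot b=\varphi(a)b$, $b\cdot a=b\varphi(a)$, and $\mathcal B_\varphi^*$ its dual bimodule. $\mathcal A$ is super weakly amenable if for every Banach algebra $\mathcal B$, every continuous homomorphism $\varphi:\mathcal A\to\mathcal B$ and every derivation $d:\mathcal A\to\mathcal B_\varphi^*$, $\langle d(a),\varphi(b)\rangle+\langle d(b),\varphi(a)\rangle=0$ for all $a,b$. *)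

(* Defs.v *)
From HB Require Import structures.
From mathcomp Require Import all_boot all_order all_algebra finmap.
From mathcomp Require Import complex.
From mathcomp Require Import all_classical all_reals topology normedtype.

Set Implicit Arguments.
Unset Strict Implicit.
Unset Printing Implicit Defensive.
Import Order.TTheory GRing.Theory Num.Theory.
Import numFieldNormedType.Exports.
Local Open Scope classical_set_scope.
Local Open Scope ring_scope.

HB.instance Definition _ (R : rcfType) := NormedModule.copy R[i] (R[i])^o.

Record semigroup := Semigroup {
  sg_car :> choiceType;
  sg_op : sg_car -> sg_car -> sg_car;
  sg_opA : associative sg_op }.

Definition sg_square (S : semigroup) : set S :=
  [set x | exists u v, sg_op u v = x].
Arguments sg_square : clear implicits.

Definition totally {I : choiceType} : set_system {fset I} :=
  filter_from setT (fun A => [set B | (A `<=` B)%fset]).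

#[global] Instance totally_filter {I : choiceType} : ProperFilter (@totally I).
Proof.
eapply filter_from_proper; last by move=> A _; exists A; rewrite /= fsubset_refl.
apply: filter_fromT_filter; first by exists fset0.
by move=> A B /=; exists (A `|` B)%fset => P /=; rewrite fsubUset => /andP[].
Qed.

Section L1.
Variable R : realType.
Local Notation C := R[i].

Definition partial_sum {I : choiceType} (x : I -> C) (A : {fset I}) : C :=
  \sum_(i : A) x (val i).

Definition gsum {I : choiceType} (x : I -> C) : C :=
  lim (partial_sum x @ totally).

Definition l1 {I : choiceType} (a : I -> C) : Prop :=
  exists M : C, forall A : {fset I}, partial_sum (fun i => `|a i|) A <= M.

Definition l1norm {I : choiceType} (a : I -> C) : C := gsum (fun i => `|a i|).

(* convolution product of l^1(S): delta_s * delta_u = delta_(su) *)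
Definition conv (S : semigroup) (a b : S -> C) : S -> C :=
  fun s => gsum (fun p : S * S => if sg_op p.1 p.2 == s then a p.1 * b p.2 else 0).

Record banach_algebra := BanachAlgebra {
  ba_car :> completeNormedModType C;
  ba_mul : ba_car -> ba_car -> ba_car;
  ba_mulA : associative ba_mul;
  ba_mulDl : forall x y z, ba_mul (x + y) z = ba_mul x z + ba_mul y z;
  ba_mulDr : forall x y z, ba_mul x (y + z) = ba_mul x y + ba_mul x z;
  ba_mulZl : forall (k : C) x y, ba_mul (k *: x) y = k *: ba_mul x y;
  ba_mulZr : forall (k : C) x y, ba_mul x (k *: y) = k *: ba_mul x y;
  ba_norm_mul : forall x y, `|ba_mul x y| <= `|x| * `|y| }.

Section Defs.
Variable S : semigroup.

Definition l1_cont_hom (B : banach_algebra) (phi : (S -> C) -> B) : Prop :=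
  [/\ forall (k : C) a b, l1 a -> l1 b ->
        phi (fun s => k * a s + b s) = k *: phi a + phi b,
      forall a b, l1 a -> l1 b -> phi (conv a b) = ba_mul (phi a) (phi b) &
      exists M : C, forall a, l1 a -> `|phi a| <= M * l1norm a].

(* bounded derivation  d : l^1(S) -> B_phi^*,  where
   <x, a.f> = f (x phi(a)),  <x, f.a> = f (phi(a) x);
   d a is represented as the functional  x |-> <x, d a>  on B. *)
Definition l1_derivation_dual_phi (B : banach_algebra) (phi : (S -> C) -> B)
    (d : (S -> C) -> B -> C) : Prop :=
  [/\ forall a, l1 a -> forall (k : C) (x y : B), d a (k *: x + y) = k * d a x + d a y,
      forall (k : C) a b, l1 a -> l1 b -> forall x : B,
        d (fun s => k * a s + b s) x = k * d a x + d b x,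
      exists M : C, forall a, l1 a -> forall x : B, `|d a x| <= M * l1norm a * `|x| &
      forall a b, l1 a -> l1 b -> forall x : B,
        d (conv a b) x = d a (ba_mul (phi b) x) + d b (ba_mul x (phi a))].

Definition l1_super_weakly_amenable : Prop :=
  forall (B : banach_algebra) (phi : (S -> C) -> B) (d : (S -> C) -> B -> C),
    l1_cont_hom phi -> l1_derivation_dual_phi phi d ->
    forall a b, l1 a -> l1 b -> d a (phi b) + d b (phi a) = 0.

Definition l1_dual_elt (f : (S -> C) -> C) : Prop :=
  (forall (k : C) a b, l1 a -> l1 b -> f (fun s => k * a s + b s) = k * f a + f b)
  /\ exists M : C, forall a, l1 a -> `|f a| <= M * l1norm a.

(* bounded derivation  D : l^1(S) -> l^1(S)^*  (dual bimodule):
   <x, a.f> = f (x a),  <x, f.a> = f (a x); D a is the functional x |-> <x, D a>. *)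
Definition l1_derivation_dual (D : (S -> C) -> (S -> C) -> C) : Prop :=
  [/\ forall a, l1 a -> forall (k : C) x y, l1 x -> l1 y ->
        D a (fun s => k * x s + y s) = k * D a x + D a y,
      forall (k : C) a b, l1 a -> l1 b -> forall x, l1 x ->
        D (fun s => k * a s + b s) x = k * D a x + D b x,
      exists M : C, forall a x, l1 a -> l1 x -> `|D a x| <= M * l1norm a * l1norm x &
      forall a b x, l1 a -> l1 b -> l1 x ->
        D (conv a b) x = D a (conv b x) + D b (conv x a)].

Definition l1_semiweakly_amenable : Prop :=
  forall D : (S -> C) -> (S -> C) -> C,
    l1_derivation_dual D ->
    (forall a b, l1 a -> l1 b -> D a b + D b a = 0) ->
    exists f : (S -> C) -> C, l1_dual_elt f /\
      forall a x, l1 a -> l1 x -> D a x = f (conv x a) - f (conv a x).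

End Defs.
End L1.

(* The semigroup S = {t, 0} with t0 = 0t = t^2 = 0^2 = 0;
   encoded on bool with t := true and 0 := false. *)
Definition tz_t : bool := true.
Definition tz_0 : bool := false.
Definition tz_op (x y : bool) : bool := tz_0.
Lemma tz_opA : associative tz_op. Proof. by []. Qed.
Definition tz_semigroup : semigroup := @Semigroup bool tz_op tz_opA.

(* Main.v *)
Require Import Defs.
From HB Require Import structures.
From mathcomp Require Import all_boot all_order all_algebra finmap.
From mathcomp Require Import complex.
From mathcomp Require Import all_classical all_reals topology normedtype.
From mathcomp Require Import lra.
Set Implicit Arguments.
Unset Strict Implicit.
Unset Printing Implicit Defensive.
Import Order.TTheory GRing.Theory Num.Theory.
Import numFieldNormedType.Exports.
Local Open Scope classical_set_scope.
Local Open Scope ring_scope.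
Local Open Scope complex_scope.
Section Comp.
Variable R : realType.
Lemma normC_real (x : R) : `|x%:C| = `|x|%:C :> R[i].
Proof. by rewrite normc_def /= expr0n addr0 sqrtr_sqr. Qed.
Lemma normC_i : `|'i| = 1 :> R[i].
Proof. by rewrite normc_def /= expr0n add0r expr1n sqrtr1. Qed.
Lemma Re_le (z : R[i]) : (`|complex.Re z|)%:C <= `|z|.
Proof.
rewrite normc_def lecR -sqrtr_sqr ler_sqrt ?sqr_ge0 ?addr_ge0 ?sqr_ge0 //.
by rewrite lerDl sqr_ge0.
Qed.
Lemma Im_le (z : R[i]) : (`|complex.Im z|)%:C <= `|z|.
Proof.
rewrite normc_def lecR -sqrtr_sqr ler_sqrt ?sqr_ge0 ?addr_ge0 ?sqr_ge0 //.
by rewrite lerDr sqr_ge0.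
Qed.
Lemma norm_le_ReIm (z : R[i]) : `|z| <= (`|complex.Re z| + `|complex.Im z|)%:C.
Proof.
rewrite [z in `|z|]complexE rmorphD /= -!normC_real.
by rewrite (le_trans (ler_normD _ _)) // normrM normC_i mul1r.
Qed.
Lemma norm_sub_le (l x : R[i]) :
  `|l - x| <= (`|complex.Re l - complex.Re x| + `|complex.Im l - complex.Im x|)%:C.
Proof. by case: l => a b; case: x => c d; exact: (norm_le_ReIm ((a - c) +i* (b - d))). Qed.

Lemma Re_cauchy (F : set_system R[i]) : ProperFilter F -> cauchy F ->
  cauchy (@complex.Re R @ F).
Proof.
move=> FF /cauchyP Fc; apply: cauchy_exP => e e0.
have [|x Fx] := Fc e%:C; first by rewrite ltcR.
exists (complex.Re x).
suff : F [set y | ball (complex.Re x) e (complex.Re y)] by [].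
apply: filterS Fx => y; rewrite /ball /=.
case: x => a b; case: y => c d h; rewrite -ltcR.
exact: le_lt_trans (Re_le ((a - c) +i* (b - d))) h.
Qed.
Lemma Im_cauchy (F : set_system R[i]) : ProperFilter F -> cauchy F ->
  cauchy (@complex.Im R @ F).
Proof.
move=> FF /cauchyP Fc; apply: cauchy_exP => e e0.
have [|x Fx] := Fc e%:C; first by rewrite ltcR.
exists (complex.Im x).
suff : F [set y | ball (complex.Im x) e (complex.Im y)] by [].
apply: filterS Fx => y; rewrite /ball /=.
case: x => a b; case: y => c d h; rewrite -ltcR.
exact: le_lt_trans (Im_le ((a - c) +i* (b - d))) h.
Qed.

Lemma C_complete (F : set_system R[i]) : ProperFilter F -> cauchy F -> cvg F.
Proof.
move=> FF Fc.
have /R_complete cRe := Re_cauchy FF Fc.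
have /R_complete cIm := Im_cauchy FF Fc.
set a := lim (@complex.Re R @ F) in cRe.
apply/cvg_ex; exists (lim (@complex.Re R @ F) +i* lim (@complex.Im R @ F)).
apply/cvgrPdist_lt => eps eps0.
have := eps0; rewrite ltcE /= => /andP[/eqP Ie Re0].
have e20 : 0 < complex.Re eps / 2 by rewrite divr_gt0.
move/cvgrPdist_lt : cRe => /(_ _ e20) hRe.
move/cvgrPdist_lt : cIm => /(_ _ e20) hIm.
near=> x.
apply: (le_lt_trans (norm_sub_le _ _)).
have h1 : `|lim (@complex.Re R @ F) - complex.Re x| < complex.Re eps / 2 by near: x.
have h2 : `|lim (@complex.Im R @ F) - complex.Im x| < complex.Re eps / 2 by near: x.
rewrite ltcE /= Ie eqxx /=.
by rewrite [X in _ < X](splitr (complex.Re eps)) ltrD.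
Unshelve. all: by end_near.
Qed.
End Comp.

HB.instance Definition _ (R : realType) := Uniform_isComplete.Build R[i] (@C_complete R).


Section Sums.
Variable R : realType.
Local Notation C := R[i].

Lemma ps_seq (I : choiceType) (x : I -> C) (A : {fset I}) :
  partial_sum x A = \sum_(i <- A) x i.
Proof. by rewrite /partial_sum big_seq_fsetE. Qed.

Lemma near_totally (I : choiceType) (F0 : {fset I}) (P : {fset I} -> Prop) :
  (forall B, (F0 `<=` B)%fset -> P B) -> \forall B \near totally, P B.
Proof. by move=> h; exists F0 => // B /h. Qed.

Lemma gsum_fin (I : choiceType) (f : I -> C) (F0 : {fset I}) :
  (forall i, i \notin F0 -> f i = 0) -> gsum f = \sum_(i <- F0) f i.
Proof.
move=> h; rewrite /gsum; apply: norm_lim_near_cst.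
exists F0 => // B /= sB; rewrite ps_seq.
by apply/esym/big_fset_incl => // i _; apply: h.
Qed.

Lemma l1norm_ge (I : choiceType) (a : I -> C) : l1 a -> forall s, `|a s| <= l1norm a.
Proof.
move=> [M hM] s.
pose p A := partial_sum (fun i => `|a i|) A.
have p_ge0 A : 0 <= p A by rewrite /p ps_seq sumr_ge0.
pose rp A := complex.Re (p A).
have pE A : p A = (rp A)%:C by rewrite /rp RRe_real // ger0_real.
have mono A B : (A `<=` B)%fset -> rp A <= rp B.
  move=> sAB; rewrite -lecR -!pE /p !ps_seq (@big_fsetID _ _ _ _ (fun i => i \in A) B) /=.
  rewrite -[X in X <= _]addr0; apply: lerD; last by rewrite sumr_ge0.
  rewrite le_eqVlt; apply/orP; left; apply/eqP/eq_fbigl => i.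
  rewrite !inE /=; apply/idP/idP => [iA|/andP[]//].
  by rewrite iA andbT (fsubsetP sAB).
pose E := [set r | exists A, r = rp A].
have hsE : has_sup E.
  split; first by exists (rp fset0), fset0.
  exists (complex.Re M) => r [A ->].
  by have := hM A; rewrite -/(p A) pE lecE => /andP[_].
have ubE A : rp A <= sup E by apply: sup_upper_bound => //; exists A.
have cv : p @ totally --> (sup E)%:C.
  apply/cvgrPdist_lt => eps eps0.
  have epsE : eps = (complex.Re eps)%:C by rewrite RRe_real // gtr0_real.
  have e0 : 0 < complex.Re eps by rewrite -ltcR -epsE.
  have [r [A ->] hr] := sup_adherent e0 hsE.
  exists A => // B /= sAB.
  rewrite pE -rmorphB /= normC_real epsE ltcR.
  have := mono _ _ sAB; have := ubE B.
  rewrite ger0_norm ?subr_ge0 ?ubE //.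
  move: hr; lra.
have -> : l1norm a = (sup E)%:C by apply: norm_cvg_lim.
have -> : `|a s| = p [fset s]%fset by rewrite /p ps_seq big_seq_fset1.
by rewrite pE lecR ubE.
Qed.
End Sums.

Definition zeroBA (R : realType) : banach_algebra R.
Proof.
refine (@BanachAlgebra R R[i] (fun _ _ => 0) _ _ _ _ _ _).
- by [].
- by move=> *; rewrite addr0.
- by move=> *; rewrite addr0.
- by move=> *; rewrite scaler0.
- by move=> *; rewrite scaler0.
- by move=> x y; rewrite normr0 mulr_ge0.
Defined.

Lemma part_a (R : realType) (S : semigroup) :
  sg_square S <> setT -> ~ l1_super_weakly_amenable R S.
Proof.
move=> hS H.
have : ~ (forall s, sg_square S s).
  by move=> h; apply: hS; apply/seteqP; split => // x _; exact: h x.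
move=> /existsNP [s0 ns0].
have conv0 (a b : S -> R[i]) : conv a b s0 = 0.
  rewrite /conv (@gsum_fin _ _ _ fset0) ?big_seq_fset0 // => -[u v] _ /=.
  by case: eqP => // h; exfalso; apply: ns0; exists u, v.
pose B := zeroBA R.
pose phi (a : S -> R[i]) : B := a s0.
pose d (a : S -> R[i]) (x : B) : R[i] := a s0 * x.
pose del (s : S) : R[i] := if s == s0 then 1 else 0.
have ldel : l1 del.
  exists 1 => A; rewrite ps_seq.
  case: (boolP (s0 \in A)) => h.
    rewrite (big_fsetD1 s0 h) big1_fset.
      by rewrite /= addr0 /del eqxx normr1.
    by move=> i; rewrite !inE /del => /andP[/negbTE -> _] _; rewrite normr0.
  rewrite big1_fset ?ler01 // => i iA _; rewrite /del.
  by case: eqP => [e|_]; [move: h; rewrite -e iA|rewrite normr0].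
have hc : l1_cont_hom phi.
  split.
  + by move=> k a b _ _.
  + by move=> a b _ _; rewrite /phi conv0.
  + by exists 1 => a la; rewrite mul1r; exact: l1norm_ge.
have hd : l1_derivation_dual_phi phi d.
  split.
  + by move=> a _ k x y; rewrite /d mulrDr mulrCA.
  + by move=> k a b _ _ x; rewrite /d mulrDl mulrA.
  + exists 1 => a x la; rewrite /d normrM mul1r; apply: ler_wpM2r => //; exact: l1norm_ge.
  + by move=> a b _ _ x; rewrite /d conv0 !mulr0 mul0r addr0.
have := H B phi d hc hd del del ldel ldel.
rewrite /d /phi /del eqxx mulr1 => h.
have : (0 : R[i]) < 1 + 1 by rewrite addr_gt0 ?ltr01.
by rewrite h ltxx.
Qed.

Section PartB.
Variable R : realType.
Local Notation C := R[i].
Local Notation S := tz_semigroup.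

Lemma sum_mono (I : choiceType) (f : I -> C) (A B : {fset I}) :
  (forall i, 0 <= f i) -> (A `<=` B)%fset ->
  \sum_(i <- A) f i <= \sum_(i <- B) f i.
Proof.
move=> f0 sAB; rewrite (@big_fsetID _ _ _ _ (fun i => i \in A) B) /=.
rewrite -[X in X <= _]addr0; apply: lerD; last by rewrite sumr_ge0.
rewrite le_eqVlt; apply/orP; left; apply/eqP/eq_fbigl => i.
rewrite !inE /=; apply/idP/idP => [iA|/andP[]//].
by rewrite iA andbT (fsubsetP sAB).
Qed.

Lemma l1_bool (a : S -> C) : l1 a.
Proof.
exists (`|a true| + `|a false|) => A; rewrite ps_seq.
have sA : (A `<=` [fset true; false])%fset by apply/fsubsetP => -[]; rewrite !inE.
apply: le_trans (sum_mono _ sA) _ => //.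
by rewrite big_fsetU1 ?inE // big_seq_fset1.
Qed.

Lemma conv_tz (a b : S -> C) :
  conv a b = fun s => if s then 0 else (a true + a false) * (b true + b false).
Proof.
apply/funext => -[].
  by rewrite /conv (@gsum_fin _ _ _ fset0) ?big_seq_fset0.
rewrite /conv (@gsum_fin _ _ _ ((true,true) |` ((true,false) |` ((false,true) |` [fset (false,false)])))%fset).
  rewrite !big_fsetU1 ?inE // big_seq_fset1 /=.
  by rewrite mulrDl !mulrDr !addrA.
by move=> [[] []]; rewrite !inE.
Qed.

Lemma tz_semiweak : l1_semiweakly_amenable R S.
Proof.
move=> D [linx lina _ der] skew.
exists (fun _ => 0); split.
  split; first by move=> *; rewrite mulr0 addr0.
  by exists 0 => a _; rewrite normr0 mul0r.
have L := l1_bool.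
pose z : S -> C := fun _ => 0.
pose dt : S -> C := fun s => if s then 1 else 0.
pose d0 : S -> C := fun s => if s then 0 else 1.
have Dz a : D a z = 0.
  have e : z = (fun s => 1 * z s + z s) by apply/funext => s; rewrite /z mul1r addr0.
  have := linx a (L a) 1 z z (L z) (L z); rewrite -e mul1r => h.
  by have := congr1 (fun t => t - D a z) h; rewrite /= subrr addrK.
have zD x : D z x = 0.
  have e : z = (fun s => 1 * z s + z s) by apply/funext => s; rewrite /z mul1r addr0.
  have := lina 1 z z (L z) (L z) x (L x); rewrite -e mul1r => h.
  by have := congr1 (fun t => t - D z x) h; rewrite /= subrr addrK.
have Daa a : D a a = 0.
  have := skew a a (L a) (L a) => /eqP; rewrite -mulr2n mulrn_eq0 /= => /eqP //.
have dec (x : S -> C) : x = (fun s => x true * dt s + (fun s => x false * d0 s + z s) s).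
  by apply/funext => -[]; rewrite /dt /d0 /z /= ?mulr1 ?mulr0 ?addr0 ?add0r.
have D0 x : D d0 x = 0.
  have := der d0 d0 x (L _) (L _) (L _).
  have -> : conv d0 d0 = d0 by rewrite conv_tz; apply/funext => -[]; rewrite /d0 //= add0r mulr1.
  have e1 : conv d0 x = (fun s => (x true + x false) * d0 s + z s).
    by rewrite conv_tz; apply/funext => -[]; rewrite /d0 /z /= ?mulr0 ?addr0 // add0r mul1r mulr1.
  have e2 : conv x d0 = (fun s => (x true + x false) * d0 s + z s).
    by rewrite conv_tz; apply/funext => -[]; rewrite /d0 /z /= ?mulr0 ?addr0 // add0r mulr1.
  by rewrite e1 e2 linx ?Daa ?Dz ?mulr0 ?addr0.
have Dt0 : D dt d0 = 0.
  by have := skew dt d0 (L _) (L _); rewrite D0 addr0.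
have Dt x : D dt x = 0.
  rewrite (dec x) linx // linx // Daa Dt0 Dz; by rewrite !mulr0 !addr0.
move=> a x _ _; rewrite subrr (dec a) lina // lina // Dt D0 zD.
by rewrite !mulr0 !addr0.
Qed.
End PartB.

Theorem mainTheorem13 :
  (forall (R : realType) (S : semigroup),
      sg_square S <> setT -> ~ l1_super_weakly_amenable R S) /\
  (forall R : realType,
      l1_semiweakly_amenable R tz_semigroup /\
      ~ l1_super_weakly_amenable R tz_semigroup).
Proof.
split; first exact: part_a.
move=> R; split; first exact: tz_semiweak.
apply: part_a => h.
have : sg_square tz_semigroup true by rewrite h.
by case=> u [v].
Qed.
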